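(* Let $F:\mathbb{R}^p\to\mathbb{R}^p$ be single-valued and $L$-Lipschitz continuous and $T:\mathbb{R}^p\rightrightarrows\mathbb{R}^p$ be maximally $3$-cyclically monotone, $\Phi:=F+T$, with $\mathrm{zer}\,\Phi\neq\emptyset$. Let $\tau>1$, $\eta>0$, and let $\{(x^k,y^k)\}$ be generated by the golden-ratio scheme: start from $x^0\in\mathrm{dom}\,\Phi$, set $y^{-1}:=x^0$, and for $k\ge0$ $$y^k:=\tfrac{\tau-1}{\tau}x^k+\tfrac1\tau y^{k-1},\qquad x^{k+1}:=J_{\eta T}(y^k-\eta Fx^k).$$ Then for any $x^\star\in\mathrm{zer}\,\Phi$, any $\gamma>0$ and every $k\ge1$, $$\begin{aligned}&\tau\|y^{k+1}-x^\star\|^2+(\tau-1)(\tau-\gamma)\|x^{k+1}-x^k\|^2\le\tau\|y^k-x^\star\|^2+\tfrac{(\tau-1)L^2\eta^2}{\gamma}\|x^k-x^{k-1}\|^2\\&\quad-\tfrac{(\tau-1)(1-\tau^2+\tau)}{\tau}\|x^{k+1}-y^k\|^2-\tau(\tau-1)\|x^k-y^k\|^2-2\eta(\tau-1)\langle Fx^k-Fx^\star,x^k-x^\star\rangle.\end{aligned}$$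
   Context: $J_{\eta T}:=(\mathbb{I}+\eta T)^{-1}$ is the resolvent of $\eta T$; $\mathrm{zer}\,\Phi:=\{x:0\in Fx+Tx\}$. $T$ is $3$-cyclically monotone if $\sum_{i=1}^3\langle u^i,x^i-x^{i+1}\rangle\ge0$ for all $(x^i,u^i)\in\mathrm{gra}\,T$ with $x^4=x^1$; maximally so if its graph is not properly contained in that of another $3$-cyclically monotone operator. $F$ is $L$-Lipschitz if $\|Fx-Fy\|\le L\|x-y\|$. The range $k\ge1$ is where $x^{k-1}$ is defined by the scheme. *)

(* Defs.v *)
From HB Require Import structures.
From mathcomp Require Import all_boot all_order all_algebra.
From mathcomp Require Import reals.
Set Implicit Arguments. Unset Strict Implicit. Unset Printing Implicit Defensive.
Import Order.TTheory GRing.Theory Num.Theory.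
Local Open Scope ring_scope.

Definition dotp {R : realType} {p : nat} (u v : 'rV[R]_p) : R :=
  \sum_(i < p) u 0 i * v 0 i.
Definition enorm {R : realType} {p : nat} (u : 'rV[R]_p) : R :=
  Num.sqrt (dotp u u).

(* A set-valued operator is represented by its graph: T x u  <->  u \in T x. *)
Definition setop (R : realType) (p : nat) := 'rV[R]_p -> 'rV[R]_p -> Prop.

Definition lipschitz {R : realType} {p : nat} (F : 'rV[R]_p -> 'rV[R]_p) (L : R) :=
  forall x y, enorm (F x - F y) <= L * enorm (x - y).

Definition cyc3_monotone {R : realType} {p : nat} (T : setop R p) :=
  forall x1 x2 x3 u1 u2 u3, T x1 u1 -> T x2 u2 -> T x3 u3 ->
    0 <= dotp u1 (x1 - x2) + dotp u2 (x2 - x3) + dotp u3 (x3 - x1).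

Definition max_cyc3_monotone {R : realType} {p : nat} (T : setop R p) :=
  cyc3_monotone T /\
  forall T' : setop R p, cyc3_monotone T' ->
    (forall x u, T x u -> T' x u) -> (forall x u, T' x u -> T x u).

(* x \in J_{eta T}(z) = (I + eta T)^{-1} z  <->  z \in x + eta T x. *)
Definition resolvent_rel {R : realType} {p : nat} (eta : R) (T : setop R p)
  (z x : 'rV[R]_p) : Prop :=
  exists u, T x u /\ z = x + eta *: u.

(* dom Phi = dom (F + T) = dom T, since F is single-valued everywhere defined. *)
Definition in_dom_Phi {R : realType} {p : nat} (F : 'rV[R]_p -> 'rV[R]_p)
  (T : setop R p) (x : 'rV[R]_p) : Prop := exists u, T x u.

Definition in_zer_Phi {R : realType} {p : nat} (F : 'rV[R]_p -> 'rV[R]_p)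
  (T : setop R p) (x : 'rV[R]_p) : Prop := exists u, T x u /\ F x + u = 0.

(* Main.v *)
Require Import Defs.
From HB Require Import structures.
From mathcomp Require Import all_boot all_order all_algebra.
From mathcomp Require Import reals ring lra.
Import Order.TTheory GRing.Theory Num.Theory.
Local Open Scope ring_scope.

Lemma dotp_ge0 {R : realType} {p} (u : 'rV[R]_p) : 0 <= dotp u u.
Proof. by rewrite /dotp; apply: sumr_ge0 => i _; rewrite -expr2 sqr_ge0. Qed.

Lemma enorm_sq (R : realType) p (u : 'rV[R]_p) : enorm u ^+ 2 = dotp u u.
Proof. by rewrite /enorm sqr_sqrtr // dotp_ge0. Qed.

Lemma lip_sq {R : realType} {p} (F : 'rV[R]_p -> 'rV[R]_p) L x y : lipschitz F L ->
  dotp (F x - F y) (F x - F y) <= L ^+ 2 * dotp (x - y) (x - y).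
Proof.
move=> hL; rewrite -!enorm_sq -exprMn.
have h0 : 0 <= enorm (F x - F y) by rewrite /enorm sqrtr_ge0.
have := hL x y => h; rewrite ler_sqr // nnegrE; exact: le_trans h.
Qed.

Lemma young {R : realType} {p} (e g : R) (P Q : 'rV[R]_p) : 0 < g ->
  2 * e * dotp P Q <= e ^+ 2 / g * dotp P P + g * dotp Q Q.
Proof.
move=> hg.
have h := dotp_ge0 (e *: P - g *: Q : 'rV[R]_p).
have : 0 <= g^-1 * dotp (e *: P - g *: Q) (e *: P - g *: Q).
  by rewrite mulr_ge0 // invr_ge0 ltW.
have -> : g^-1 * dotp (e *: P - g *: Q) (e *: P - g *: Q) =
  e ^+ 2 / g * dotp P P + g * dotp Q Q - 2 * e * dotp P Q.
  rewrite /dotp !mulr_sumr -big_split -sumrB /=; apply: eq_bigr => i _.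
  rewrite !mxE; field; by rewrite gt_eqF.
by rewrite subr_ge0.
Qed.

Theorem lemma9 (R : realType) (p : nat) (F : 'rV[R]_p -> 'rV[R]_p) (L : R)
  (T : setop R p) (tau eta : R) (x y : nat -> 'rV[R]_p) :
  lipschitz F L ->
  max_cyc3_monotone T ->
  (exists z, in_zer_Phi F T z) ->
  1 < tau -> 0 < eta ->
  in_dom_Phi F T (x 0%N) ->
  y 0%N = ((tau - 1) / tau) *: x 0%N + tau^-1 *: x 0%N ->
  (forall k, y k.+1 = ((tau - 1) / tau) *: x k.+1 + tau^-1 *: y k) ->
  (forall k, resolvent_rel eta T (y k - eta *: F (x k)) (x k.+1)) ->
  forall (xstar : 'rV[R]_p) (gamma : R), in_zer_Phi F T xstar -> 0 < gamma ->
  forall k : nat, (1 <= k)%N ->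
    tau * dotp (y k.+1 - xstar) (y k.+1 - xstar)
      + (tau - 1) * (tau - gamma) * dotp (x k.+1 - x k) (x k.+1 - x k)
    <= tau * dotp (y k - xstar) (y k - xstar)
       + (tau - 1) * L ^+ 2 * eta ^+ 2 / gamma * dotp (x k - x k.-1) (x k - x k.-1)
       - (tau - 1) * (1 - tau ^+ 2 + tau) / tau * dotp (x k.+1 - y k) (x k.+1 - y k)
       - tau * (tau - 1) * dotp (x k - y k) (x k - y k)
       - 2 * eta * (tau - 1) * dotp (F (x k) - F xstar) (x k - xstar).
Proof.
move=> hL [hT _] _ ht he _ _ hyS hres xs g [ws [hws hFws]] hg [//|k'] _ /=.
have [u [hTu hu]] := hres k'.+1.
have [v [hTv hv]] := hres k'.
have hcyc := hT _ _ _ _ _ _ hTu hws hTv.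
have eu : u = eta^-1 *: (y k'.+1 - eta *: F (x k'.+1) - x k'.+2).
  by rewrite hu addrAC subrr add0r scalerA mulVf ?gt_eqF // scale1r.
have ev : v = eta^-1 *: (y k' - eta *: F (x k') - x k'.+1).
  by rewrite hv addrAC subrr add0r scalerA mulVf ?gt_eqF // scale1r.
have ew : ws = - F xs by apply/eqP; rewrite -addr_eq0 addrC hFws.
have hY := young eta g (F (x k'.+1) - F (x k')) (x k'.+1 - x k'.+2) hg.
have hLip := lip_sq _ _ (x k'.+1) (x k') hL.
rewrite eu ev ew in hcyc.
set M := dotp _ _ + _ + _ in hcyc.
set D := dotp (F (x k'.+1) - F (x k')) _ in hY.
set Q := dotp (F (x k'.+1) - F (x k')) _ in hY hLip.
set N1 := dotp (x k'.+1 - x k') _ in hLip.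
set N2 := dotp (x k'.+1 - x k'.+2) _ in hY.
rewrite -subr_ge0.
match goal with |- is_true (0 <= ?Z) => have E : Z = 2*(tau-1)*eta*M + ((tau-1)*(L^+2*eta^+2/g*N1 + g*N2) - 2*eta*(tau-1)*D) end. 
  rewrite /M /D /N1 /N2 !hyS /dotp.
  rewrite !mulr_sumr.
  do ! (rewrite -big_split /= || rewrite -sumrB /= || rewrite mulr_sumr).
  apply: eq_bigr => i _; rewrite !mxE.
  field; rewrite !gt_eqF //; lra.
have t1 : 0 < tau - 1 by lra.
rewrite E.
have h1 : 0 <= 2*(tau-1)*eta*M by rewrite !mulr_ge0 // ltW.
have h2 : 2*eta*D <= L^+2*eta^+2/g*N1 + g*N2.
  apply: (le_trans hY); rewrite lerD2r.
  have -> : L^+2*eta^+2/g*N1 = eta^+2/g*(L^+2*N1) by ring.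
  by rewrite ler_wpM2l // mulr_ge0 ?sqr_ge0 // invr_ge0 ltW.
have h3 : (tau-1)*(2*eta*D) <= (tau-1)*(L^+2*eta^+2/g*N1 + g*N2) by rewrite ler_wpM2l // ltW.
have -> : 2*eta*(tau-1)*D = (tau-1)*(2*eta*D) by ring.
by apply: addr_ge0 => //; rewrite subr_ge0.
Qed.
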